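(* Let $q=2^f$ with $f\ge4$, let $q_0<q$ be a power of $2$, and assume $\gcd(q_0^2-1,q-1)=1$. Then: (i) $K'=Z(K)=\{1\}\cup\Omega_\infty$; (ii) $K'$ and $K/K'$ are elementary abelian $2$-groups of order $q$; (iii) for every $u\in\mathbb{F}_q$, the set $\Omega_u$ generates $K$; (iv) $H$ (acting by conjugation) acts transitively on the non-identity elements of $K'$ and transitively on the non-identity elements of $K/K'$ (hence irreducibly on $K'$ and on $K/K'$); (v) $H$ is a maximal subgroup of $HK'$, and $HK'$ is a maximal subgroup of $G$.
   Context: For $a,c\in\mathbb{F}_q$ and $\lambda\in\mathbb{F}_q^*$ let $\Phi_{a,c}=\begin{bmatrix}1&0&0\\ a&1&0\\ c&a^{q_0}&1\end{bmatrix}$ and $\Psi_\lambda=\mathrm{diag}(1,\lambda,\lambda^{q_0+1})$. Let $K=\{\Phi_{a,c}: a,c\in\mathbb{F}_q\}$, $H=\{\Psi_\lambda:\lambda\in\mathbb{F}_q^*\}$, $G=HK\le GL(3,\mathbb{F}_q)$; $K'$ is the commutator subgroup and $Z(K)$ the center of $K$. For $u\in\mathbb{F}_q$ let $\Omega_u=\{\Phi_{a,ua^{q_0+1}}: a\in\mathbb{F}_q^*\}$, and $\Omega_\infty=\{\Phi_{0,c}: c\in\mathbb{F}_q^*\}$. *)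

(* Defs.v *)
From HB Require Import structures.
From mathcomp Require Import all_boot all_order all_algebra all_fingroup all_solvable all_field.
Set Implicit Arguments. Unset Strict Implicit. Unset Printing Implicit Defensive.
Import GRing.Theory.
Local Open Scope ring_scope.

Section SuzukiLike.
Variables (F : finFieldType) (q0 : nat).

Definition Phi (a c : F) : 'M[F]_3 :=
  \matrix_(i < 3, j < 3)
    match nat_of_ord i, nat_of_ord j with
    | 0, 0 | 1, 1 | 2, 2 => 1
    | 1, 0 => a
    | 2, 0 => c
    | 2, 1 => a ^+ q0
    | _, _ => 0
    end.

Definition Psi (l : F) : 'M[F]_3 :=
  \matrix_(i < 3, j < 3)
    if i == j then
      match nat_of_ord i with
      | 0 => 1
      | 1 => l
      | _ => l ^+ q0.+1
      end
    else 0.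

Local Open Scope group_scope.

Definition Kset : {set {'GL_3[F]}} :=
  [set g : {'GL_3[F]} | [exists a : F, exists c : F, GLval g == Phi a c]].

Definition Hset : {set {'GL_3[F]}} :=
  [set g : {'GL_3[F]} | [exists l : F, (l != 0)%R && (GLval g == Psi l)]].

Definition Gset : {set {'GL_3[F]}} := Hset * Kset.

Definition Omega (u : F) : {set {'GL_3[F]}} :=
  [set g : {'GL_3[F]} |
     [exists a : F, (a != 0)%R && (GLval g == Phi a (u * a ^+ q0.+1)%R)]].

Definition Omega_inf : {set {'GL_3[F]}} :=
  [set g : {'GL_3[F]} | [exists c : F, (c != 0)%R && (GLval g == Phi 0 c)]].

End SuzukiLike.

(* Main.v *)
Require Import Defs.
From HB Require Import structures.
From mathcomp Require Import all_boot all_order all_algebra all_fingroup all_solvable all_field.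
From mathcomp Require Import zify ring.
Set Implicit Arguments. Unset Strict Implicit. Unset Printing Implicit Defensive.
Import GRing.Theory.

Section Main.
Variables (F : finFieldType) (f e : nat).
Hypotheses (hq : #|F| = (2 ^ f)%N) (hf : (4 <= f)%N) (he : (2 ^ e < 2 ^ f)%N)
  (hgcd : coprime ((2 ^ e) ^ 2 - 1) (2 ^ f - 1)).
Local Notation q0 := (2 ^ e)%N.
Local Open Scope ring_scope.

Lemma char2 : 2%N \in [pchar F].
Proof. exact: (card_finPcharP hq). Qed.

Lemma add2 (x : F) : x + x = 0.
Proof. exact: (@addrr_pchar2 F char2 x). Qed.

Lemma frobD (x y : F) : (x + y) ^+ q0 = x ^+ q0 + y ^+ q0.
Proof.
apply: exprDn_pchar; rewrite pnatX; apply/orP; left.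
rewrite (eq_pnat _ (pcharf_eq char2)).
by rewrite pnatE.
Qed.

Lemma e_gt0 : (0 < e)%N.
Proof.
case: e hgcd => [|//]; rewrite expn0 exp1n subnn /coprime gcd0n => /eqP h.
have : (2 ^ 4 <= 2 ^ f)%N by rewrite leq_exp2l.
have : (0 < 2 ^ f)%N by rewrite expn_gt0.
lia.
Qed.

Lemma unit_pow (x : F) : x != 0 -> x ^+ (2 ^ f - 1) = 1.
Proof.
move=> nx; have := expf_card x; rewrite hq.
have hn : (2 ^ f = (2 ^ f - 1).+1)%N by rewrite subn1 prednK // expn_gt0.
move: (2 ^ f - 1)%N hn => n ->; rewrite exprS => h.
by apply: (mulfI nx); rewrite mulr1 h.
Qed.

Lemma coprime_n : coprime q0.+1 (2 ^ f - 1).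
Proof.
apply: coprime_dvdl hgcd.
have -> : ((2 ^ e) ^ 2 - 1 = (2 ^ e).+1 * (2 ^ e - 1))%N.
  have : (0 < 2 ^ e)%N by rewrite expn_gt0. set a := (2 ^ e)%N. move=> a0.
  rewrite !expnS expn0 muln1. nia.
exact: dvdn_mulr.
Qed.

Lemma rootn (c : F) : c != 0 -> exists l : F, l != 0 /\ l ^+ q0.+1 = c.
Proof.
move=> nc.
have m0 : (0 < 2 ^ f - 1)%N.
  have : (2 ^ 4 <= 2 ^ f)%N by rewrite leq_exp2l. lia.
have [a _ ha] := Bezoutl q0.+1 m0.
move: ha; rewrite gcdnC (eqP coprime_n) => /dvdnP [k hk].
exists (c^-1 ^+ a); split; first by rewrite expf_neq0 // invr_eq0.
rewrite -exprM exprVn.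
have h : c ^+ (a * q0.+1) * c = 1.
  by rewrite -exprSr -addn1 addnC hk mulnC exprM unit_pow // expr1n.
have h' : c ^+ (a * q0.+1) = c^-1 by rewrite -(mulfK nc (c ^+ _)) h mul1r.
by rewrite h' invrK.
Qed.

Lemma nonfix : exists b : F, b ^+ q0 != b.
Proof.
apply/existsP; apply: contraT; rewrite negb_exists => /forallP /= hall.
have e0 := e_gt0.
have q2 : (2 <= q0)%N by rewrite -{1}(expn1 2) leq_exp2l.
pose p : {poly F} := 'X^q0 - 'X.
have sp : size p = q0.+1.
  by rewrite /p size_polyDl size_polyXn // size_polyN size_polyX.
have pn0 : p != 0 by rewrite -size_poly_eq0 sp.
have ar : all (root p) (enum F).
  apply/allP => b _; rewrite /root /p !hornerE.
  by move: (hall b); rewrite negbK => /eqP ->; rewrite subrr.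
have := max_poly_roots pn0 ar (enum_uniq _).
by rewrite -cardE hq sp ltnS leqNgt he.
Qed.

Lemma q0p : (0 < q0)%N.
Proof. by rewrite expn_gt0. Qed.

Lemma PhiM (a c b d : F) :
  Phi q0 a c *m Phi q0 b d = Phi q0 (a + b) (c + d + a ^+ q0 * b).
Proof.
apply/matrixP => i j; rewrite !mxE !big_ord_recr !big_ord0 /= !mxE.
case: i => [[|[|[|i]]] Hi] //=; case: j => [[|[|[|j]]] Hj] //=; rewrite ?frobD; ring.
Qed.

Lemma Phi00 : Phi q0 0 0 = 1%:M :> 'M[F]_3.
Proof.
apply/matrixP => i j; rewrite !mxE.
by case: i => [[|[|[|i]]] Hi] //=; case: j => [[|[|[|j]]] Hj] //=; rewrite expr0n; case: q0 q0p.
Qed.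

Lemma Phi_unit (a c : F) : Phi q0 a c \is a GRing.unit.
Proof.
have h : Phi q0 a c *m Phi q0 a (c + a ^+ q0 * a) = 1%:M.
  by rewrite PhiM add2 addrA add2 add0r add2 Phi00.
exact: (mulmx1_unit h).1.
Qed.

Lemma PsiM (l m : F) : Psi q0 l *m Psi q0 m = Psi q0 (l * m).
Proof.
apply/matrixP => i j; rewrite !mxE !big_ord_recr !big_ord0 /= !mxE.
case: i => [[|[|[|i]]] Hi] //=; case: j => [[|[|[|j]]] Hj] //=; rewrite ?exprMn; ring.
Qed.

Lemma Psi1 : Psi q0 1 = 1%:M :> 'M[F]_3.
Proof.
apply/matrixP => i j; rewrite !mxE.
by case: i => [[|[|[|i]]] Hi] //=; case: j => [[|[|[|j]]] Hj] //=; rewrite expr1n.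
Qed.

Lemma Psi_unit (l : F) : l != 0 -> Psi q0 l \is a GRing.unit.
Proof.
move=> nl; have h : Psi q0 l *m Psi q0 l^-1 = 1%:M by rewrite PsiM divff // Psi1.
exact: (mulmx1_unit h).1.
Qed.

Lemma PsiPhi (l a c : F) : l != 0 ->
  Psi q0 l *m Phi q0 (a / l) (c / l ^+ q0.+1) = Phi q0 a c *m Psi q0 l.
Proof.
move=> nl; apply/matrixP => i j; rewrite !mxE !big_ord_recr !big_ord0 /= !mxE.
case: i => [[|[|[|i]]] Hi] //=; case: j => [[|[|[|j]]] Hj] //=; rewrite ?mulr0 ?mul0r ?addr0 ?add0r ?mulr1 ?mul1r //.
all: rewrite ?expr_div_n ?exprS; field; rewrite ?expf_neq0 //.
Qed.


Local Open Scope group_scope.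

Definition mkPhi (a c : F) : {'GL_3[F]} := insubd (1%g : {'GL_3[F]}) (Phi q0 a c).
Definition mkPsi (l : F) : {'GL_3[F]} := insubd (1%g : {'GL_3[F]}) (Psi q0 l).

Lemma GLinj (u v : {'GL_3[F]}) : GLval u = GLval v -> u = v.
Proof. exact: val_inj. Qed.

Lemma val_mkPhi a c : GLval (mkPhi a c) = Phi q0 a c.
Proof. by rewrite /mkPhi insubdK //; apply: Phi_unit. Qed.

Lemma val_mkPsi l : (l != 0)%R -> GLval (mkPsi l) = Psi q0 l.
Proof. by move=> nl; rewrite /mkPsi insubdK //; apply: Psi_unit. Qed.

Lemma mkPhiM a c b d : mkPhi a c * mkPhi b d = mkPhi (a + b)%R (c + d + a ^+ q0 * b)%R.
Proof. by apply: GLinj; rewrite GL_ME !val_mkPhi -mulmxE PhiM. Qed.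

Lemma mkPhi1 : mkPhi 0%R 0%R = 1.
Proof. by apply: GLinj; rewrite val_mkPhi Phi00. Qed.

Lemma mkPsiM l m : (l != 0)%R -> (m != 0)%R -> mkPsi l * mkPsi m = mkPsi (l * m)%R.
Proof.
by move=> nl nm; apply: GLinj; rewrite GL_ME (val_mkPsi nl) (val_mkPsi nm) (val_mkPsi (mulf_neq0 nl nm)) -mulmxE PsiM.
Qed.

Lemma mkPsi1 : mkPsi 1%R = 1.
Proof. by apply: GLinj; rewrite val_mkPsi ?oner_eq0 // Psi1. Qed.

Lemma mkPhi_inj a c b d : mkPhi a c = mkPhi b d -> a = b /\ c = d.
Proof.
move=> /(congr1 GLval); rewrite !val_mkPhi => /matrixP h.
by move: (h (inord 1) (inord 0)) (h (inord 2) (inord 0)); rewrite !mxE !inordK.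
Qed.

Lemma conjPhi l a c : (l != 0)%R -> mkPhi a c ^ mkPsi l = mkPhi (a / l)%R (c / l ^+ q0.+1)%R.
Proof.
move=> nl; rewrite conjgE; apply: (mulgI (mkPsi l)); rewrite mulgA mulgV mul1g.
by apply: GLinj; rewrite !GL_ME val_mkPsi // !val_mkPhi -!mulmxE PsiPhi.
Qed.

Lemma memK g : reflect (exists a c, g = mkPhi a c) (g \in Kset F q0).
Proof.
rewrite inE; apply: (iffP existsP) => [[a /existsP [c /eqP h]]|[a [c ->]]].
  by exists a, c; apply: GLinj; rewrite val_mkPhi.
by exists a; apply/existsP; exists c; rewrite val_mkPhi.
Qed.

Lemma mkPhi_K a c : mkPhi a c \in Kset F q0.
Proof. by apply/memK; exists a, c. Qed.

Lemma memH g : reflect (exists2 l, (l != 0)%R & g = mkPsi l) (g \in Hset F q0).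
Proof.
rewrite inE; apply: (iffP existsP) => [[l /andP [nl /eqP h]]|[l nl ->]].
  by exists l => //; apply: GLinj; rewrite val_mkPsi //; apply/eqP.
by exists l; rewrite nl (val_mkPsi nl) eqxx.
Qed.

Lemma mkPsi_H l : (l != 0)%R -> mkPsi l \in Hset F q0.
Proof. by move=> nl; apply/memH; exists l. Qed.

Lemma memOinf g : reflect (exists2 c, (c != 0)%R & g = mkPhi 0%R c) (g \in Omega_inf F q0).
Proof.
rewrite inE; apply: (iffP existsP) => [[c /andP [nc /eqP h]]|[c nc ->]].
  by exists c => //; apply: GLinj; rewrite val_mkPhi.
by exists c; rewrite nc val_mkPhi eqxx.
Qed.

Lemma memOmega u g : reflect (exists2 a, (a != 0)%R & g = mkPhi a (u * a ^+ q0.+1)%R) (g \in Omega q0 u).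
Proof.
rewrite inE; apply: (iffP existsP) => [[a /andP [na /eqP h]]|[a na ->]].
  by exists a => //; apply: GLinj; rewrite val_mkPhi.
by exists a; rewrite na val_mkPhi eqxx.
Qed.

Lemma mkPhi_notH a c : (c != 0)%R -> mkPhi a c \notin Hset F q0.
Proof.
move=> nc; apply/memH => [[l nl /(congr1 GLval)]]; rewrite val_mkPhi val_mkPsi //.
move/matrixP => /(_ (inord 2) (inord 0)); rewrite !mxE !inordK //= => h.
move: h; case: ifP => [/eqP/(congr1 (@nat_of_ord _))|_ h]; first by rewrite !inordK.
by move: nc; rewrite h eqxx.
Qed.


Local Notation K := (Kset F q0).
Local Notation H := (Hset F q0).

Lemma K_gs : group_set K.
Proof.
apply/group_setP; split; first by rewrite -mkPhi1 mkPhi_K.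
by move=> x y /memK [a [c ->]] /memK [b [d ->]]; rewrite mkPhiM mkPhi_K.
Qed.
Canonical K_group := Group K_gs.

Lemma H_gs : group_set H.
Proof.
apply/group_setP; split; first by rewrite -mkPsi1 mkPsi_H ?oner_eq0.
move=> x y /memH [l nl ->] /memH [m nm ->]; rewrite mkPsiM // mkPsi_H //.
by rewrite mulf_neq0.
Qed.
Canonical H_group := Group H_gs.

Definition Zset := [set g | [exists c, g == mkPhi 0%R c]].

Lemma memZ g : reflect (exists c, g = mkPhi 0%R c) (g \in Zset).
Proof. by rewrite inE; apply: (iffP existsP) => [[c /eqP]|[c ->]]; exists c. Qed.

Lemma mkPhi_Z c : mkPhi 0%R c \in Zset.
Proof. by apply/memZ; exists c. Qed.

Lemma Z_gs : group_set Zset.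
Proof.
apply/group_setP; split; first by rewrite -mkPhi1 mkPhi_Z.
move=> x y /memZ [c ->] /memZ [d ->]; rewrite mkPhiM.
by rewrite addr0 expr0n /= eqn0Ngt q0p mul0r addr0 mkPhi_Z.
Qed.
Canonical Z_group := Group Z_gs.

Lemma ZsetE : Zset = [set 1] :|: Omega_inf F q0.
Proof.
apply/setP => g; rewrite in_setU in_set1; apply/memZ/orP => [[c ->]|[/eqP ->|/memOinf [c _ ->]]].
- by case: (eqVneq c 0%R) => [->|nc]; [left; rewrite mkPhi1 | right; apply/memOinf; exists c].
- by exists 0%R; rewrite mkPhi1.
- by exists c.
Qed.

Lemma card_Z : #|Zset| = (2 ^ f)%N.
Proof.
have -> : Zset = [set mkPhi 0%R c | c : F].
  by apply/setP => g; apply/memZ/imsetP => [[c ->]|[c _ ->]]; exists c.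
rewrite card_imset ?cardT -?cardE ?hq //.
by move=> c d /mkPhi_inj [].
Qed.

Lemma card_K : #|K| = (2 ^ f * 2 ^ f)%N.
Proof.
have -> : K = [set mkPhi p.1 p.2 | p : F * F].
  apply/setP => g; apply/memK/imsetP => [[a [c ->]]|[[a c] _ ->]]; last by exists a, c.
  by exists (a, c).
rewrite card_imset ?cardT -?cardE ?card_prod ?hq //.
by move=> [a c] [b d] /mkPhi_inj [/= -> ->].
Qed.

Lemma char2_eq (x y : F) : (x + y = 0)%R -> x = y.
Proof. by move=> h; rewrite -[y]add0r -h -addrA add2 addr0. Qed.

Lemma commPhi_aux (a b c d : F) : (c + d + a ^+ q0 * b =
  d + c + b ^+ q0 * a + (a ^+ q0 * b + b ^+ q0 * a) + (b + a) ^+ q0 * 0)%R.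
Proof.
apply: char2_eq.
have -> : (c + d + a ^+ q0 * b + (d + c + b ^+ q0 * a + (a ^+ q0 * b + b ^+ q0 * a) + (b + a) ^+ q0 * 0) =
   (c + c) + (d + d) + (a ^+ q0 * b + a ^+ q0 * b) + (b ^+ q0 * a + b ^+ q0 * a))%R by ring.
by rewrite !add2; ring.
Qed.

Lemma commPhi a c b d :
  [~ mkPhi a c, mkPhi b d] = mkPhi 0%R (a ^+ q0 * b + b ^+ q0 * a)%R.
Proof.
apply: (mulgI (mkPhi b d * mkPhi a c)); rewrite -commgC !mkPhiM.
by congr mkPhi; [ring | exact: commPhi_aux].
Qed.

Lemma Z_central x y : x \in Zset -> y \in K -> commute x y.
Proof.
move=> /memZ [c ->] /memK [a [d ->]]; apply/commgP.
by rewrite commPhi expr0n /= eqn0Ngt q0p !mul0r mulr0 addr0 mkPhi1.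
Qed.

Lemma Z_sub_K : Zset \subset K.
Proof. by apply/subsetP => x /memZ [c ->]; apply: mkPhi_K. Qed.

Lemma centerK : 'Z(K) = Zset.
Proof.
apply/eqP; rewrite eqEsubset; apply/andP; split.
- apply/subsetP => x /centerP [/memK [a [c ->]] cx].
  have h b : (a ^+ q0 * b + b ^+ q0 * a = 0)%R.
    have /commgP := cx (mkPhi b 0%R) (mkPhi_K _ _).
    by rewrite commPhi -mkPhi1 => /eqP /mkPhi_inj [].
  have ha : (a ^+ q0 = a)%R.
    apply: char2_eq; rewrite -[RHS](h 1%R) expr1n; ring.
  have [b0 hb0] := nonfix.
  have : (a * (b0 + b0 ^+ q0) = 0)%R by rewrite -(h b0) ha; ring.
  move/eqP; rewrite mulf_eq0 => /orP [/eqP ->|]; first exact: mkPhi_Z.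
  by move=> /eqP /char2_eq hb; move: hb0; rewrite -hb eqxx.
- apply/subsetP => x xZ; apply/centerP; split; first exact: (subsetP Z_sub_K).
  by move=> y yK; exact: Z_central.
Qed.

Lemma commc (c : F) : (c != 0)%R -> exists a b, [/\ (a != 0)%R, (b != 0)%R &
  forall x y, [~ mkPhi a x, mkPhi b y] = mkPhi 0%R c].
Proof.
move=> nc; have [b0 hb0] := nonfix.
set z := (b0 + b0 ^+ q0)%R.
have nz : (z != 0)%R.
  by apply/negP => /eqP /char2_eq h; move: hb0; rewrite -h eqxx.
have nb0 : (b0 != 0)%R.
  by apply/negP => /eqP h; move: hb0; rewrite h expr0n eqn0Ngt q0p /= eqxx.
have ncz : (c / z != 0)%R by rewrite mulf_neq0 ?invr_eq0.
have [l [nl hl]] := rootn ncz.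
exists l, (l * b0)%R; split => //; first by rewrite mulf_neq0.
move=> x y; rewrite commPhi; congr mkPhi.
have -> : (l ^+ q0 * (l * b0) + (l * b0) ^+ q0 * l = l ^+ q0.+1 * z)%R.
  by rewrite /z exprS exprMn; ring.
by rewrite hl mulfVK.
Qed.

Lemma KderE : [~: K, K] = Zset.
Proof.
apply/eqP; rewrite eqEsubset; apply/andP; split.
  rewrite gen_subG; apply/subsetP => _ /imset2P [x y /memK [a [c ->]] /memK [b [d ->]] ->].
  by rewrite commPhi mkPhi_Z.
apply/subsetP => _ /memZ [c ->].
case: (eqVneq c 0%R) => [->|nc]; first by rewrite mkPhi1 group1.
have [a [b [_ _ h]]] := commc nc.
by rewrite -(h 0%R 0%R) mem_commg ?mkPhi_K.
Qed.

Lemma conjK x h : x \in K -> h \in H -> x ^ h \in K.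
Proof.
by move=> /memK [a [c ->]] /memH [l nl ->]; rewrite conjPhi // mkPhi_K.
Qed.

Lemma conjZ x h : x \in Zset -> h \in H -> x ^ h \in Zset.
Proof.
by move=> /memZ [c ->] /memH [l nl ->]; rewrite conjPhi // mul0r mkPhi_Z.
Qed.

Lemma norm_by (G : {group {'GL_3[F]}}) :
  (forall x h, x \in G -> h \in H -> x ^ h \in G) -> H \subset 'N(G).
Proof.
move=> hc; apply/normsP => h hH.
apply/eqP; rewrite eqEcard cardJg leqnn andbT.
apply/subsetP => y; rewrite mem_conjg => hy.
by rewrite -(conjgKV h y) hc // groupV.
Qed.

Lemma H_norm_K : H \subset 'N(K).
Proof. by apply: norm_by => x h; apply: conjK. Qed.

Lemma H_norm_Z : H \subset 'N(Zset).
Proof. by apply: norm_by => x h; apply: conjZ. Qed.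

Lemma K_norm_Z : K \subset 'N(Zset).
Proof.
apply/normsP => x xK; apply/eqP; rewrite eqEcard cardJg leqnn andbT.
apply/subsetP => y; rewrite mem_conjg => hy.
by rewrite -(conjgKV x y); have /commgP/conjg_fixP -> := Z_central hy xK.
Qed.

Local Notation K' := [~: K, K].

Lemma memK' x : (x \in K') = (x \in Zset).
Proof. by rewrite KderE. Qed.

Lemma K'_sub_K : K' \subset K.
Proof. by rewrite KderE Z_sub_K. Qed.

Lemma H_norm_K' : H \subset 'N(K').
Proof. by rewrite KderE H_norm_Z. Qed.

Lemma K_norm_K' : K \subset 'N(K').
Proof. by rewrite KderE K_norm_Z. Qed.

Lemma NK'_Phi a c : mkPhi a c \in 'N(K').
Proof. exact: (subsetP K_norm_K') _ (mkPhi_K _ _). Qed.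

Lemma NK'_H h : h \in H -> h \in 'N(K').
Proof. exact: (subsetP H_norm_K'). Qed.

Lemma Phi_split a c : mkPhi a c = mkPhi a 0%R * mkPhi 0%R c.
Proof. by rewrite mkPhiM mulr0 !addr0 add0r. Qed.

Lemma coset_Phi a c : coset K' (mkPhi a c) = coset K' (mkPhi a 0%R).
Proof.
rewrite Phi_split morphM ?NK'_Phi //= (coset_id (x := mkPhi 0%R c)) ?mulg1 //.
by rewrite memK' mkPhi_Z.
Qed.

Lemma coset_Phi1 a c : (coset K' (mkPhi a c) == 1) = (a == 0%R).
Proof.
apply/idP/idP => [/eqP /coset_idr|/eqP ->].
  by rewrite NK'_Phi memK' => /(_ isT) /memZ [d /mkPhi_inj [-> _]].
by apply/eqP/coset_id; rewrite memK' mkPhi_Z.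
Qed.

Lemma abelem_K' : 2.-abelem K'.
Proof.
rewrite KderE; apply/abelemP => //; split; first by have := center_abelian K; rewrite centerK.
move=> x /memZ [c ->].
by rewrite expgS expg1 mkPhiM !add2 mulr0 !addr0 mkPhi1.
Qed.

Lemma card_K' : #|K'| = (2 ^ f)%N.
Proof. by rewrite KderE card_Z. Qed.

Lemma abelem_KK' : 2.-abelem (K / K').
Proof.
apply/abelemP => //; split; first exact: sub_der1_abelian.
move=> _ /morphimP [x Nx /memK [a [c ->]] ->].
rewrite -morphX ?NK'_Phi //= expgS expg1 mkPhiM !add2; apply: coset_id.
by rewrite memK' mkPhi_Z.
Qed.

Lemma card_KK' : #|K / K'| = (2 ^ f)%N.
Proof.
rewrite card_quotient ?K_norm_K' //.
have := Lagrange K'_sub_K; rewrite card_K' card_K => /eqP.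
by rewrite eqn_pmul2l ?expn_gt0 // => /eqP.
Qed.

Lemma conj_to_Z c d : (c != 0)%R -> (d != 0)%R ->
  exists2 l, (l != 0)%R & mkPhi 0%R c ^ mkPsi l = mkPhi 0%R d.
Proof.
move=> nc nd; have ncd : (c / d != 0)%R by rewrite mulf_neq0 ?invr_eq0.
have [l [nl hl]] := rootn ncd.
exists l => //; rewrite conjPhi // mul0r hl; congr mkPhi; field.
by rewrite nd nc.
Qed.

Lemma conj_to_Q a a' c : (a != 0)%R -> (a' != 0)%R ->
  exists2 l, (l != 0)%R & coset K' (mkPhi a c ^ mkPsi l) = coset K' (mkPhi a' 0%R).
Proof.
move=> na na'; have nl : (a / a' != 0)%R by rewrite mulf_neq0 ?invr_eq0.
exists (a / a')%R => //; rewrite conjPhi // coset_Phi.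
have -> : (a / (a / a') = a')%R by field; rewrite na na'.
by [].
Qed.

Lemma Phi01_neq1 : mkPhi 0%R 1%R != 1.
Proof.
by apply/eqP; rewrite -mkPhi1 => /mkPhi_inj [_ /eqP]; rewrite oner_eq0.
Qed.

Lemma trans_K' : [transitive H, on K'^# | 'J].
Proof.
apply/imsetP; exists (mkPhi 0%R 1%R).
  by rewrite in_setD1 memK' mkPhi_Z andbT Phi01_neq1.
apply/setP => w; rewrite orbitE; apply/idP/idP => [|/imsetP [h /memH [l nl ->] ->]].
  rewrite in_setD1 memK' => /andP [nw /memZ [d wd]].
  have nd : (d != 0)%R by apply: contra nw => /eqP d0; rewrite wd d0 mkPhi1.
  have [l nl hl] := conj_to_Z (oner_neq0 F) nd.
  by apply/imsetP; exists (mkPsi l); [exact: mkPsi_H | rewrite /= hl wd].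
rewrite /= conjPhi // in_setD1 memK' mul0r mkPhi_Z andbT.
apply/eqP; rewrite -mkPhi1 => /mkPhi_inj [_ /eqP].
by rewrite mulf_eq0 oner_eq0 invr_eq0 expf_eq0 (negbTE nl) andbF.
Qed.

Lemma irr_K' (L : {group {'GL_3[F]}}) : L \subset K' -> H \subset 'N(L) ->
  L = 1 :> {set _} \/ L = K' :> {set _}.
Proof.
move=> sL nL; have [->|] := eqVneq (L : {set _}) 1; first by left.
case/trivgPn => z zL nz; right; apply/eqP; rewrite eqEsubset sL /=.
have := subsetP sL z zL; rewrite memK' => /memZ [c zc].
have nc : (c != 0)%R by apply: contra nz => /eqP c0; rewrite zc c0 mkPhi1.
apply/subsetP => w; rewrite memK' => /memZ [d ->].
have [->|nd] := eqVneq d 0%R; first by rewrite mkPhi1 group1.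
have [l nl <-] := conj_to_Z nc nd.
by rewrite -zc memJ_norm // (subsetP nL) // mkPsi_H.
Qed.

Lemma trans_KK' : [transitive H, on (K / K')^# | ('J / [~: K, K]%G)%act].
Proof.
apply/imsetP; exists (coset K' (mkPhi 1%R 0%R)).
  by rewrite in_setD1 coset_Phi1 oner_eq0 /= mem_quotient ?mkPhi_K.
apply/setP => w; rewrite orbitE; apply/idP/idP => [|/imsetP [h /memH [l nl ->] ->]].
  rewrite in_setD1 => /andP [nw /morphimP [x Nx /memK [a [c xE]] wE]].
  rewrite {}wE {}xE in nw *.
  have na : (a != 0)%R by move: nw; rewrite /= coset_Phi1.
  have [l nl hl] := conj_to_Q 0%R (oner_neq0 F) na.
  apply/imsetP; exists (mkPsi l); first exact: mkPsi_H.
  by rewrite qactE ?dom_qactJ ?NK'_Phi ?NK'_H ?mkPsi_H //= hl coset_Phi.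
rewrite qactE ?dom_qactJ ?NK'_Phi ?NK'_H ?mkPsi_H //= conjPhi //.
rewrite in_setD1 coset_Phi1 mul1r invr_eq0 (negbTE nl) /=.
by rewrite mem_quotient ?mkPhi_K.
Qed.

Lemma irr_KK' (L : {group coset_of [~: K, K]}) : L \subset K / K' ->
  H / K' \subset 'N(L) -> L = 1 :> {set _} \/ L = K / K' :> {set _}.
Proof.
move=> sL nL; have [->|] := eqVneq (L : {set _}) 1; first by left.
case/trivgPn => z zL nz; right; apply/eqP; rewrite eqEsubset sL /=.
have := subsetP sL z zL => /morphimP [x Nx /memK [a [c ->]] zc].
have na : (a != 0)%R by move: nz; rewrite zc /= coset_Phi1.
apply/subsetP => w /morphimP [y Ny /memK [a' [c' ->]] ->].
have [->|na'] := eqVneq a' 0%R.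
  by move: (coset_Phi1 0%R c'); rewrite eqxx => /eqP /= ->; rewrite group1.
have [l nl hl] := conj_to_Q c na na'.
rewrite /= coset_Phi -hl morphJ ?NK'_Phi ?NK'_H ?mkPsi_H //= -zc.
by rewrite memJ_norm // (subsetP nL) // mem_quotient // mkPsi_H.
Qed.

Lemma notin_HK' : mkPhi 1%R 0%R \notin H * K'.
Proof.
apply/mulsgP => [[h k /memH [l nl ->]]]; rewrite memK' => /memZ [c ->].
move/(congr1 (fun g : {'GL_3[F]} => GLval g (@Ordinal 3 1 isT) (@Ordinal 3 0 isT))).
rewrite GL_ME val_mkPhi (val_mkPsi nl) val_mkPhi -mulmxE !mxE.
rewrite !big_ord_recr big_ord0 /= !mxE /=.
have -> : (0 + 0 * 1 + l * 0 + 0 * c = 0 :> F)%R by ring.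
by move/eqP; rewrite oner_eq0.
Qed.

Lemma max_H : maximal H (H * K').
Proof.
rewrite -(norm_joinEl H_norm_K').
apply/maxgroupP; split.
  rewrite properE joing_subl /=; apply/subsetPn; exists (mkPhi 0%R 1%R).
    by apply: (subsetP (joing_subr _ _)); rewrite memK' mkPhi_Z.
  by rewrite mkPhi_notH ?oner_neq0.
move=> M pM sHM; have sMHK := proper_sub pM.
rewrite norm_joinEl ?H_norm_K' // in sMHK.
have eM : H * (K' :&: M) = M by rewrite group_modl // (setIidPr sMHK).
have nHKM : H \subset 'N(K' :&: M) by rewrite normsI ?H_norm_K' // (subset_trans sHM) ?normG.
have [h|h] := irr_K' (L := (K' :&: M)%G) (subsetIl _ _) nHKM.
  by rewrite -eM /= h mulg1.
have sK'M : K' \subset M by rewrite -h subsetIr.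
by move: pM; rewrite properE join_subG sHM sK'M andbF.
Qed.

Lemma max_HK' : maximal (H * K') (H * K).
Proof.
rewrite -(norm_joinEl H_norm_K') -(norm_joinEl H_norm_K).
apply/maxgroupP; split.
  rewrite properE; apply/andP; split.
    by rewrite join_subG joing_subl (subset_trans K'_sub_K) ?joing_subr.
  apply/subsetPn; exists (mkPhi 1%R 0%R).
    by apply: (subsetP (joing_subr _ _)); rewrite mkPhi_K.
  by change (mkPhi 1%R 0%R \notin H <*> K'); rewrite norm_joinEl ?H_norm_K' // notin_HK'.
move=> M pM sHK'M; have sMHK := proper_sub pM.
rewrite norm_joinEl ?H_norm_K // in sMHK.
have sHM : H \subset M := subset_trans (joing_subl _ _) sHK'M.
have sK'M : K' \subset M := subset_trans (joing_subr _ _) sHK'M.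
have eM : H * (K :&: M) = M by rewrite group_modl // (setIidPr sMHK).
have nHKM : H \subset 'N(K :&: M) by rewrite normsI ?H_norm_K // (subset_trans sHM) ?normG.
have sKMN : K :&: M \subset 'N(K') := subset_trans (subsetIl _ _) K_norm_K'.
have [h|h] := irr_KK' (L := ((K :&: M) / K')%G) (quotientS _ (subsetIl _ _)) (quotient_norms _ nHKM).
  have : (K :&: M) / K' \subset [1] by rewrite /= h.
  rewrite quotient_sub1 // => sKMK'.
  apply/eqP; rewrite eqEsubset sHK'M andbT; change (M \subset H <*> K').
  rewrite -{1}eM norm_joinEl ?H_norm_K' //.
  exact: mulgS.
have : K / K' \subset (K :&: M)%G / K' by rewrite -h.
have sK'KM : K' \subset (K :&: M)%G by rewrite subsetI K'_sub_K sK'M.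
rewrite quotientSGK ?K_norm_K' // => sKKM.
have sKM := subset_trans sKKM (subsetIr _ _).
by move: pM; rewrite properE join_subG sHM sKM andbF.
Qed.

Lemma gen_Omega u : <<Omega q0 u>> = K.
Proof.
apply/eqP; rewrite eqEsubset gen_subG; apply/andP; split.
  by apply/subsetP => _ /memOmega [a _ ->]; apply: mkPhi_K.
have sZ : Zset \subset <<Omega q0 u>>.
  apply/subsetP => _ /memZ [c ->].
  have [->|nc] := eqVneq c 0%R; first by rewrite mkPhi1 group1.
  have [a [b [na nb h]]] := commc nc.
  rewrite -(h (u * a ^+ q0.+1)%R (u * b ^+ q0.+1)%R) groupR // mem_gen //.
    by apply/memOmega; exists a.
  by apply/memOmega; exists b.
apply/subsetP => _ /memK [a [c ->]].
have [->|na] := eqVneq a 0%R; first by apply: (subsetP sZ); apply: mkPhi_Z.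
have -> : mkPhi a c = mkPhi a (u * a ^+ q0.+1)%R * mkPhi 0%R (c - u * a ^+ q0.+1)%R.
  by rewrite mkPhiM mulr0 !addr0 addrC subrK.
rewrite groupM //; first by apply: mem_gen; apply/memOmega; exists a.
by apply: (subsetP sZ); apply: mkPhi_Z.
Qed.

Lemma main_in :
  let q0 := (2 ^ e)%N in
  let K := Kset F q0 in
  let H := Hset F q0 in
  let G := Gset F q0 in
  let K' := [~: K, K] in
  [/\ K' = 'Z(K) /\ 'Z(K) = [set 1] :|: Omega_inf F q0,
      (2.-abelem K' /\ #|K'| = (2 ^ f)%N) /\
      (2.-abelem (K / K') /\ #|K / K'| = (2 ^ f)%N),
      (forall u : F, <<Omega q0 u>> = K),
      [transitive H, on K'^# | 'J] /\
      [transitive H, on (K / K')^# | ('J / [~: K, K]%G)%act] /\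
      (forall L : {group {'GL_3[F]}}, L \subset K' -> H \subset 'N(L) ->
         L = 1 :> {set _} \/ L = K' :> {set _}) /\
      (forall L : {group coset_of [~: K, K]}, L \subset K / K' ->
         H / K' \subset 'N(L) -> L = 1 :> {set _} \/ L = K / K' :> {set _})
  &   maximal H (H * K') /\ maximal (H * K') G].
Proof.
move=> q0' K0 H0 G0 K0'; rewrite /K0' /G0 /H0 /K0 /q0' /Gset.
split.
- by rewrite KderE centerK ZsetE.
- by split; split; [exact: abelem_K' | exact: card_K' | exact: abelem_KK' | exact: card_KK'].
- exact: gen_Omega.
- split; first exact: trans_K'.
  split; first exact: trans_KK'.
  by split; [exact: irr_K' | exact: irr_KK'].
- by split; [exact: max_H | exact: max_HK'].
Qed.

End Main.

Local Open Scope group_scope.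

Theorem lemma4p2 (F : finFieldType) (f e : nat)
  (hq : #|F| = (2 ^ f)%N) (hf : (4 <= f)%N) (he : (2 ^ e < 2 ^ f)%N)
  (hgcd : coprime ((2 ^ e) ^ 2 - 1) (2 ^ f - 1)) :
  let q0 := (2 ^ e)%N in
  let K := Kset F q0 in
  let H := Hset F q0 in
  let G := Gset F q0 in
  let K' := [~: K, K] in
  (* (i) *)
  [/\ K' = 'Z(K) /\ 'Z(K) = [set 1] :|: Omega_inf F q0,
  (* (ii) *)
      (2.-abelem K' /\ #|K'| = (2 ^ f)%N) /\
      (2.-abelem (K / K') /\ #|K / K'| = (2 ^ f)%N),
  (* (iii) *)
      (forall u : F, <<Omega q0 u>> = K),
  (* (iv) *)
      [transitive H, on K'^# | 'J] /\
      [transitive H, on (K / K')^# | ('J / [~: K, K]%G)%act] /\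
      (* hence irreducibly: no proper nontrivial H-invariant subgroups *)
      (forall L : {group {'GL_3[F]}}, L \subset K' -> H \subset 'N(L) ->
         L = 1 :> {set _} \/ L = K' :> {set _}) /\
      (forall L : {group coset_of [~: K, K]}, L \subset K / K' ->
         H / K' \subset 'N(L) -> L = 1 :> {set _} \/ L = K / K' :> {set _})
  & (* (v) *)
      maximal H (H * K') /\ maximal (H * K') G].
Proof. exact: main_in. Qed.
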